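(* Let $k$ be a commutative ring, $G$ a group and $H=(H_g)_{g\in G}$ a Hopf $G$-coalgebra. Let $\underline M=(X,(M_x)_{x\in X})$ be a right $H$-Hopf module in $\mathcal{T}_k$ (with structure $f$, $\rho_{x,g}$ as described in the context), let $X_G$ be the set of $G$-orbits of $X$, and for $x\in X$ write $\overline{x}$ for its orbit. For each orbit $O\in X_G$ let $$M^{\mathrm{co}H}_O=\Bigl\{(m_y)_{y\in O}\in\prod_{y\in O}M_y\ \Big|\ \rho_{y,g}(m_{yg})=m_y\otimes 1_{H_g}\text{ for all }y\in O,\ g\in G\Bigr\},$$ and let $\underline{M}^{\mathrm{co}H}\otimes\underline H$ be the Turaev $k$-module $\bigl(X_G\times G,(M^{\mathrm{co}H}_O\otimes H_g)_{(O,g)}\bigr)$. Then the morphism in $\mathcal{T}_k$ $$\underline\phi=(\varphi,(\phi_x)_{x\in X}):\ \underline{M}^{\mathrm{co}H}\otimes\underline H\to\underline M,$$ with underlying map $\varphi:X\to X_G\times G$, $\varphi(x)=(\overline{x},f(x))$, and components $\phi_x:M^{\mathrm{co}H}_{\overline x}\otimes H_{f(x)}\to M_x$, $\phi_x\bigl((m_y)_{y\in\overline x}\otimes h\bigr)=m_x h$, is an isomorphism in $\mathcal{T}_k$.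
   Context: Let $k$ be a commutative ring. The Turaev category $\mathcal{T}_k$ has objects pairs $(X,M)$, $X$ a set, $M=(M_x)_{x\in X}$ a family of $k$-modules; a morphism $(X,M)\to(Y,N)$ is a pair $(f,\varphi)$ with $f:Y\to X$ a function and $\varphi_y:M_{f(y)}\to N_y$ $k$-linear maps; composition $(g,\psi)\circ(f,\varphi)=(f\circ g,(\psi_z\circ\varphi_{g(z)})_z)$. For a group $G$, a Hopf $G$-coalgebra is a family of $k$-algebras $(H_g)_{g\in G}$ (multiplication $\mu_g$, unit $1_{H_g}$) with algebra maps $\Delta_{g,h}:H_{gh}\to H_g\otimes H_h$, written $\Delta_{g,h}(h')=h'_{(1,g)}\otimes h'_{(2,h)}$, and an algebra map $\varepsilon:H_1\to k$, satisfying $(\Delta_{g,h}\otimes H_l)\Delta_{gh,l}=(H_g\otimes\Delta_{h,l})\Delta_{g,hl}$, $(H_g\otimes\varepsilon)\Delta_{g,1}=\mathrm{id}=(\varepsilon\otimes H_g)\Delta_{1,g}$, together with $k$-linear maps $S_g:H_{g^{-1}}\to H_g$ with $\mu_g(S_g\otimes H_g)\Delta_{g^{-1},g}=1_{H_g}\varepsilon=\mu_g(H_g\otimes S_g)\Delta_{g,g^{-1}}$. A right $H$-Hopf module in $\mathcal{T}_k$ is a Turaev $k$-module $(X,(M_x)_{x\in X})$ together with: a right action of $G$ on the set $X$; a map $f:X\to G$ with $f(xg)=f(x)g$ for all $x\in X,g\in G$; a right $H_{f(x)}$-module structure on each $M_x$; and $k$-linear maps $\rho_{x,g}:M_{xg}\to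 M_x\otimes H_g$, written $\rho_{x,g}(m)=m_{[0]}\otimes m_{[1]}$, such that for all $x\in X$, $g,h\in G$: $(M_x\otimes\varepsilon)\circ\rho_{x,1}=\mathrm{id}_{M_x}$; $(\rho_{x,g}\otimes H_h)\circ\rho_{xg,h}=(M_x\otimes\Delta_{g,h})\circ\rho_{x,gh}$; and for $m\in M_{xg}$ and $h'\in H_{f(xg)}=H_{f(x)g}$, $\rho_{x,g}(mh')=m_{[0]}h'_{(1,f(x))}\otimes m_{[1]}h'_{(2,g)}$. (This is exactly a Hopf module over the Hopf algebra $(G,H)$ in the symmetric monoidal category $\mathcal{T}_k$.) *)

(* Defs.v *)
From HB Require Import structures.
From mathcomp Require Import boolp.
From mathcomp Require Import all_boot all_algebra.

Set Implicit Arguments.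
Unset Strict Implicit.
Unset Printing Implicit Defensive.

Import GRing.Theory.
Local Open Scope ring_scope.

Definition tr (A : Type) (F : A -> Type) (a b : A) (e : a = b) (x : F a) : F b :=
  eq_rect a F x b e.
Arguments tr {A} F {a b} e x.

(* Elements are formal sums  sum_i m_i (x) n_i  (lists of pairs), two such  *)
(* sums being identified iff they have the same image under every k-bilinear*)
(* map into every k-module; this is exactly the usual tensor product.       *)
Section Tensor.
Variables (k : comPzRingType) (M N : lmodType k).

Definition bilinear_map (P : lmodType k) (b : M -> N -> P) : Prop :=
  (forall n, linear (fun m => b m n)) /\ (forall m, linear (b m)).

Definition tsum (P : lmodType k) (b : M -> N -> P) (s : seq (M * N)) : P :=
  \sum_(p <- s) b p.1 p.2.

Definition teq (s t : seq (M * N)) : Prop :=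
  forall (P : lmodType k) (b : M -> N -> P), bilinear_map b -> tsum b s = tsum b t.

Record tensor_type := TensorOf {
  tcls : seq (M * N) -> Prop;
  tclsP : exists s, tcls = teq s }.

HB.instance Definition _ := gen_eqMixin tensor_type.
HB.instance Definition _ := gen_choiceMixin tensor_type.

Definition tpi (s : seq (M * N)) : tensor_type := @TensorOf (teq s) (ex_intro _ s erefl).
Definition trepr (x : tensor_type) : seq (M * N) := proj1_sig (cid (tclsP x)).

Lemma teq_sym s t : teq s t -> teq t s.
Proof. by move=> h P b hb; rewrite (h P b hb). Qed.

Lemma teq_trans s t u : teq s t -> teq t u -> teq s u.
Proof. by move=> h1 h2 P b hb; rewrite (h1 P b hb) (h2 P b hb). Qed.

Lemma tpi_eq s t : tpi s = tpi t <-> teq s t.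
Proof.
split.
  move=> /(congr1 tcls) /= e.
  have : teq t s by rewrite -e.
  exact: teq_sym.
move=> h.
have e : teq s = teq t.
  apply: funext => u; rewrite propeqE; split => hu.
    exact: teq_trans (teq_sym h) hu.
  exact: teq_trans h hu.
rewrite /tpi; move: (ex_intro _ s _) (ex_intro _ t _).
rewrite e => p q; congr TensorOf; exact: Prop_irrelevance.
Qed.

Lemma tpiK x : tpi (trepr x) = x.
Proof.
case: x => c p; rewrite /trepr /tpi /=.
case: (cid p) => s /= e; move: p; rewrite e => p.
congr TensorOf; exact: Prop_irrelevance.
Qed.

Lemma tpi_surj x : exists s, x = tpi s.
Proof. by exists (trepr x); rewrite tpiK. Qed.

Lemma treprP s : teq (trepr (tpi s)) s.
Proof. by apply/tpi_eq; rewrite tpiK. Qed.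

Section BilinFacts.
Variables (P : lmodType k) (b : M -> N -> P).
Hypothesis hb : bilinear_map b.

Lemma bl_addl m m' n : b (m + m') n = b m n + b m' n.
Proof. exact: (GRing.semilinear_linear (hb.1 n)).2. Qed.

Lemma bl_scalel a m n : b (a *: m) n = a *: b m n.
Proof. exact: (GRing.semilinear_linear (hb.1 n)).1. Qed.

Lemma bl_oppl m n : b (- m) n = - b m n.
Proof. by rewrite -scaleN1r bl_scalel scaleN1r. Qed.

Lemma bl_0l n : b 0 n = 0.
Proof. by rewrite -(scale0r (0 : M)) bl_scalel scale0r. Qed.

Lemma tsum_cat s t : tsum b (s ++ t) = tsum b s + tsum b t.
Proof. exact: big_cat. Qed.

Lemma tsum_opp s : tsum b (map (fun p => (- p.1, p.2)) s) = - tsum b s.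
Proof.
rewrite /tsum big_map -sumrN; apply: eq_bigr => p _; exact: bl_oppl.
Qed.

Lemma tsum_scale a s : tsum b (map (fun p => (a *: p.1, p.2)) s) = a *: tsum b s.
Proof.
rewrite /tsum big_map scaler_sumr; apply: eq_bigr => p _; exact: bl_scalel.
Qed.
End BilinFacts.

Definition tzero : tensor_type := tpi [::].
Definition tadd (x y : tensor_type) : tensor_type := tpi (trepr x ++ trepr y).
Definition topp (x : tensor_type) : tensor_type :=
  tpi (map (fun p => (- p.1, p.2)) (trepr x)).
Definition tscale (a : k) (x : tensor_type) : tensor_type :=
  tpi (map (fun p => (a *: p.1, p.2)) (trepr x)).

Lemma taddE s t : tadd (tpi s) (tpi t) = tpi (s ++ t).
Proof.
apply/tpi_eq => P b hb.
by rewrite !tsum_cat // (treprP s hb) (treprP t hb).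
Qed.

Lemma toppE s : topp (tpi s) = tpi (map (fun p => (- p.1, p.2)) s).
Proof. by apply/tpi_eq => P b hb; rewrite !tsum_opp // (treprP s hb). Qed.

Lemma tscaleE a s : tscale a (tpi s) = tpi (map (fun p => (a *: p.1, p.2)) s).
Proof. by apply/tpi_eq => P b hb; rewrite !tsum_scale // (treprP s hb). Qed.

Lemma taddA : associative tadd.
Proof.
move=> x y z; case: (tpi_surj x) => s ->; case: (tpi_surj y) => t ->.
by case: (tpi_surj z) => u ->; rewrite !taddE catA.
Qed.

Lemma taddC : commutative tadd.
Proof.
move=> x y; case: (tpi_surj x) => s ->; case: (tpi_surj y) => t ->.
by rewrite !taddE; apply/tpi_eq => P b hb; rewrite !tsum_cat // addrC.
Qed.

Lemma tadd0 : left_id tzero tadd.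
Proof. by move=> x; case: (tpi_surj x) => s ->; rewrite /tzero taddE. Qed.

Lemma taddN : left_inverse tzero topp tadd.
Proof.
move=> x; case: (tpi_surj x) => s ->; rewrite toppE taddE.
apply/tpi_eq => P b hb; rewrite tsum_cat // tsum_opp // addNr.
by rewrite /tsum big_nil.
Qed.

HB.instance Definition _ :=
  GRing.isZmodule.Build tensor_type taddA taddC tadd0 taddN.

Lemma tscaleA a c x : tscale a (tscale c x) = tscale (a * c) x.
Proof.
case: (tpi_surj x) => s ->; rewrite !tscaleE.
by apply/tpi_eq => P b hb; rewrite !tsum_scale // scalerA.
Qed.

Lemma tscale1 x : tscale 1 x = x.
Proof.
case: (tpi_surj x) => s ->; rewrite !tscaleE.
by apply/tpi_eq => P b hb; rewrite !tsum_scale // scale1r.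
Qed.

Lemma tscaleDr a x y : tscale a (tadd x y) = tadd (tscale a x) (tscale a y).
Proof.
case: (tpi_surj x) => s ->; case: (tpi_surj y) => t ->.
by rewrite taddE !tscaleE taddE map_cat.
Qed.

Lemma tscaleDl x a c : tscale (a + c) x = tadd (tscale a x) (tscale c x).
Proof.
case: (tpi_surj x) => s ->; rewrite !tscaleE taddE.
by apply/tpi_eq => P b hb; rewrite tsum_cat // !tsum_scale // scalerDl.
Qed.

HB.instance Definition _ :=
  GRing.Zmodule_isLmodule.Build k tensor_type tscaleA tscale1 tscaleDr tscaleDl.

Definition tens (m : M) (n : N) : tensor_type := tpi [:: (m, n)].

Definition tlift (P : lmodType k) (b : M -> N -> P) (x : tensor_type) : P :=
  tsum b (trepr x).

Lemma tensZl a m n : tens (a *: m) n = a *: tens m n.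
Proof.
by change (tpi [:: (a *: m, n)] = tscale a (tpi [:: (m, n)])); rewrite tscaleE.
Qed.

Lemma tensDl m m' n : tens (m + m') n = tens m n + tens m' n.
Proof.
change (tpi [:: (m + m', n)] = tadd (tpi [:: (m, n)]) (tpi [:: (m', n)])).
rewrite taddE /=; apply/tpi_eq => P b hb.
by rewrite /tsum !big_cons !big_nil /= !addr0 bl_addl.
Qed.

Lemma tens0l n : tens 0 n = 0.
Proof. by rewrite -(scale0r (0 : M)) tensZl scale0r. Qed.

Lemma tensNl m n : tens (- m) n = - tens m n.
Proof. by rewrite -scaleN1r tensZl scaleN1r. Qed.

End Tensor.

Section TensorOps.
Variable k : comPzRingType.

Definition tmap (A B C D : lmodType k) (f : A -> C) (g : B -> D)
  (x : tensor_type A B) : tensor_type C D :=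
  tlift (fun a b => tens (f a) (g b)) x.

Definition tassoc (A B C : lmodType k) (x : tensor_type (tensor_type A B) C) :
  tensor_type A (tensor_type B C) :=
  tlift (fun (t : tensor_type A B) (c : C) => tlift (fun a b => tens a (tens b c)) t) x.

Definition tmul (A B : lmodType k) (muA : A -> A -> A) (muB : B -> B -> B)
  (x y : tensor_type A B) : tensor_type A B :=
  tlift (fun a b => tlift (fun c d => tens (muA a c) (muB b d)) y) x.

Definition is_kalg (A : lmodType k) (mu : A -> A -> A) (u : A) : Prop :=
  [/\ associative mu, left_id u mu, right_id u mu & bilinear_map mu].

End TensorOps.

Section Turaev.
Variable k : comPzRingType.

Definition tmor (X Y : Type) (M : X -> lmodType k) (N : Y -> lmodType k) :=
  {f : Y -> X & forall y, M (f y) -> N y}.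

Definition tmor_linear X Y (M : X -> lmodType k) (N : Y -> lmodType k)
  (F : tmor M N) : Prop := forall y, linear (projT2 F y).

(* composition  F' o F  (first F, then F') *)
Definition tcomp X Y Z (M : X -> lmodType k) (N : Y -> lmodType k)
  (P : Z -> lmodType k) (F : tmor M N) (F' : tmor N P) : tmor M P :=
  existT (fun g : Z -> X => forall z, M (g z) -> P z)
    (fun z => projT1 F (projT1 F' z))
    (fun z m => projT2 F' z (projT2 F (projT1 F' z) m)).

Definition tid X (M : X -> lmodType k) : tmor M M :=
  existT (fun g : X -> X => forall x, M (g x) -> M x) (fun x => x) (fun x m => m).

Definition tiso X Y (M : X -> lmodType k) (N : Y -> lmodType k) (F : tmor M N) : Prop :=
  tmor_linear F /\
  exists F' : tmor N M, tmor_linear F' /\ tcomp F F' = tid M /\ tcomp F' F = tid N.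

End Turaev.

Record ractType (G : groupType) (X : Type) := RAct {
  ract :> X -> G -> X;
  ract1 : forall x, ract x 1%g = x;
  ractM : forall x g h, ract (ract x g) h = ract x (g * h)%g }.

Section Orbits.
Variables (G : groupType) (X : Type) (a : ractType G X).

Definition orbit (x : X) : X -> Prop := fun y => exists g : G, y = a x g.

Definition orbits := {O : X -> Prop | exists x, O = orbit x}.

Definition orb (x : X) : orbits := exist _ (orbit x) (ex_intro _ x erefl).

Definition osub (O : orbits) := {y : X | proj1_sig O y}.

Lemma osub_act (O : orbits) (y : osub O) (g : G) : proj1_sig O (a (proj1_sig y) g).
Proof.
move: O y => [P hP] [y Py] /=; move: Py => /= Py.
case: hP => x eP; subst P; case: Py => g0 ->.
by exists (g0 * g)%g; rewrite ractM.
Qed.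

Definition oact (O : orbits) (y : osub O) (g : G) : osub O :=
  exist _ (a (proj1_sig y) g) (osub_act y g).

Definition xin (x : X) : osub (orb x) :=
  exist (fun y => orbit x y) x (ex_intro _ 1%g (esym (ract1 a x))).

End Orbits.

Record is_hopf_G_coalgebra (k : comPzRingType) (G : groupType)
  (H : G -> lmodType k) (mu : forall g, H g -> H g -> H g) (one : forall g, H g)
  (Delta : forall g h : G, {linear H (g * h)%g -> tensor_type (H g) (H h)})
  (eps : {linear H 1%g -> k^o}) (S : forall g : G, {linear H (g^-1)%g -> H g}) : Prop := {
  hc_alg : forall g, is_kalg (mu g) (one g);
  hc_Delta_mul : forall g h (x y : H (g * h)%g),
    Delta g h (mu _ x y) = tmul (mu g) (mu h) (Delta g h x) (Delta g h y);
  hc_Delta_one : forall g h, Delta g h (one _) = tens (one g) (one h);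
  hc_eps_mul : forall x y : H 1%g, eps (mu _ x y) = (eps x : k) * eps y;
  hc_eps_one : (eps (one 1%g) : k) = 1;
  hc_coassoc : forall g h l (x : H (g * h * l)%g),
    tassoc (tmap (Delta g h) (fun z : H l => z) (Delta (g * h)%g l x))
    = tmap (fun z : H g => z) (Delta h l) (Delta g (h * l)%g (tr H (esym (mulgA g h l)) x));
  hc_counit_r : forall g (x : H g),
    tlift (fun (p : H g) (q : H 1%g) => (eps q : k) *: p)
      (Delta g 1%g (tr H (esym (mulg1 g)) x)) = x;
  hc_counit_l : forall g (x : H g),
    tlift (fun (p : H 1%g) (q : H g) => (eps p : k) *: q)
      (Delta 1%g g (tr H (esym (mul1g g)) x)) = x;
  hc_antipode_l : forall g (x : H 1%g),
    tlift (fun (p : H (g^-1)%g) (q : H g) => mu g (S g p) q)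
      (Delta (g^-1)%g g (tr H (esym (mulVg g)) x)) = (eps x : k) *: one g;
  hc_antipode_r : forall g (x : H 1%g),
    tlift (fun (p : H g) (q : H (g^-1)%g) => mu g p (S g q))
      (Delta g (g^-1)%g (tr H (esym (mulgV g)) x)) = (eps x : k) *: one g }.

Record is_hopf_module (k : comPzRingType) (G : groupType)
  (H : G -> lmodType k) (mu : forall g, H g -> H g -> H g) (one : forall g, H g)
  (Delta : forall g h : G, {linear H (g * h)%g -> tensor_type (H g) (H h)})
  (eps : {linear H 1%g -> k^o})
  (X : Type) (a : ractType G X) (f : X -> G) (M : X -> lmodType k)
  (mact : forall x, M x -> H (f x) -> M x)
  (rho : forall x g, {linear M (a x g) -> tensor_type (M x) (H g)}) : Prop := {
  hm_f : forall x g, f (a x g) = (f x * g)%g;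
  hm_mod_assoc : forall x (m : M x) (p q : H (f x)),
    mact x m (mu _ p q) = mact x (mact x m p) q;
  hm_mod_unit : forall x (m : M x), mact x m (one _) = m;
  hm_mod_bilin : forall x, bilinear_map (mact x);
  hm_counit : forall x (m : M x),
    tlift (fun (m0 : M x) (q : H 1%g) => (eps q : k) *: m0)
      (rho x 1%g (tr M (esym (ract1 a x)) m)) = m;
  hm_coassoc : forall x g h (m : M (a (a x g) h)),
    tassoc (tmap (rho x g) (fun z : H h => z) (rho (a x g) h m))
    = tmap (fun z : M x => z) (Delta g h) (rho x (g * h)%g (tr M (ractM a x g h) m));
  hm_compat : forall x g (m : M (a x g)) (h' : H (f (a x g))),
    rho x g (mact _ m h')
    = tlift (fun (m0 : M x) (m1 : H g) =>
         tlift (fun (p : H (f x)) (q : H g) => tens (mact x m0 p) (mu g m1 q))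
           (Delta (f x) g (tr H (hm_f x g) h')))
        (rho x g m) }.

Section Coinvariants.
Variables (k : comPzRingType) (G : groupType) (X : Type) (a : ractType G X).
Variables (M : X -> lmodType k) (H : G -> lmodType k) (one : forall g, H g).
Variable rho : forall x g, {linear M (a x g) -> tensor_type (M x) (H g)}.
Variable O : orbits a.

Definition coinvariant (m : forall y : osub O, M (proj1_sig y)) : Prop :=
  forall (y : osub O) (g : G), rho (proj1_sig y) g (m (oact y g)) = tens (m y) (one g).

Record coinv := CoInv {
  cval : forall y : osub O, M (proj1_sig y);
  cvalP : coinvariant cval }.

HB.instance Definition _ := gen_eqMixin coinv.
HB.instance Definition _ := gen_choiceMixin coinv.

Lemma coinv_eq (u v : coinv) : (forall y, cval u y = cval v y) -> u = v.
Proof.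
case: u v => [cu pu] [cv pv] /= h.
have e : cu = cv by apply: functional_extensionality_dep.
by move: pu pv; rewrite e => pu pv; congr CoInv; exact: Prop_irrelevance.
Qed.

Lemma czero_subproof : coinvariant (fun y => 0).
Proof. by move=> y g; rewrite linear0 tens0l. Qed.

Lemma cadd_subproof (u v : coinv) : coinvariant (fun y => cval u y + cval v y).
Proof. by move=> y g; rewrite linearD (cvalP u) (cvalP v) tensDl. Qed.

Lemma cscale_subproof (c : k) (u : coinv) : coinvariant (fun y => c *: cval u y).
Proof. by move=> y g; rewrite linearZ (cvalP u) tensZl. Qed.

Lemma copp_subproof (u : coinv) : coinvariant (fun y => - cval u y).
Proof. by move=> y g; rewrite linearN (cvalP u) tensNl. Qed.

Definition czero := CoInv czero_subproof.
Definition cadd u v := CoInv (cadd_subproof u v).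
Definition copp u := CoInv (copp_subproof u).
Definition cscale c u := CoInv (cscale_subproof c u).

Lemma caddA : associative cadd.
Proof. by move=> u v w; apply: coinv_eq => y /=; rewrite addrA. Qed.
Lemma caddC : commutative cadd.
Proof. by move=> u v; apply: coinv_eq => y /=; rewrite addrC. Qed.
Lemma cadd0 : left_id czero cadd.
Proof. by move=> u; apply: coinv_eq => y /=; rewrite add0r. Qed.
Lemma caddN : left_inverse czero copp cadd.
Proof. by move=> u; apply: coinv_eq => y /=; rewrite addNr. Qed.

HB.instance Definition _ := GRing.isZmodule.Build coinv caddA caddC cadd0 caddN.

Lemma cscaleA c d u : cscale c (cscale d u) = cscale (c * d) u.
Proof. by apply: coinv_eq => y /=; rewrite scalerA. Qed.
Lemma cscale1 u : cscale 1 u = u.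
Proof. by apply: coinv_eq => y /=; rewrite scale1r. Qed.
Lemma cscaleDr c u v : cscale c (cadd u v) = cadd (cscale c u) (cscale c v).
Proof. by apply: coinv_eq => y /=; rewrite scalerDr. Qed.
Lemma cscaleDl u c d : cscale (c + d) u = cadd (cscale c u) (cscale d u).
Proof. by apply: coinv_eq => y /=; rewrite scalerDl. Qed.

HB.instance Definition _ :=
  GRing.Zmodule_isLmodule.Build k coinv cscaleA cscale1 cscaleDr cscaleDl.

End Coinvariants.

Section Phi.
Variables (k : comPzRingType) (G : groupType) (H : G -> lmodType k).
Variable one : forall g, H g.
Variables (X : Type) (a : ractType G X) (f : X -> G) (M : X -> lmodType k).
Variable mact : forall x, M x -> H (f x) -> M x.
Variable rho : forall x g, {linear M (a x g) -> tensor_type (M x) (H g)}.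

Definition coinvH (p : orbits a * G) : lmodType k :=
  tensor_type (coinv one rho p.1) (H p.2).

Definition hopf_phi : tmor coinvH M :=
  existT (fun phi : X -> orbits a * G => forall x, coinvH (phi x) -> M x)
    (fun x => (orb a x, f x))
    (fun x (t : tensor_type (coinv one rho (orb a x)) (H (f x))) =>
       tlift (fun (c : coinv one rho (orb a x)) (h : H (f x)) =>
                @mact x (cval c (xin a x)) h) t).

End Phi.

(* Main.v *)
Require Import Defs.
From HB Require Import structures.
From mathcomp Require Import boolp.
From mathcomp Require Import all_boot all_algebra.

Set Implicit Arguments.
Unset Strict Implicit.
Unset Printing Implicit Defensive.
Import GRing.Theory.
Local Open Scope ring_scope.

Section TensLib.
Variable k : comPzRingType.
Implicit Types M N P Q A B C D U V W : lmodType k.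

Lemma lin_sum M P (F : M -> P) (I : Type) (s : seq I) (G : I -> M) :
  linear F -> F (\sum_(i <- s) G i) = \sum_(i <- s) F (G i).
Proof.
move=> hF; have F0 : F 0 = 0.
  have h := hF 1 0 0; rewrite !scale1r !addr0 in h.
  by apply: (addrI (F 0)); rewrite addr0 -h.
elim: s => [|x s IH]; first by rewrite !big_nil.
rewrite !big_cons -IH.
have := hF 1 (G x) (\sum_(i <- s) G i); rewrite !scale1r; exact.
Qed.

Lemma lin_add M P (F : M -> P) : linear F -> forall u v, F (u + v) = F u + F v.
Proof. by move=> hF u v; have := hF 1 u v; rewrite !scale1r. Qed.

Lemma lin_scale M P (F : M -> P) : linear F -> forall c u, F (c *: u) = c *: F u.
Proof. by move=> hF; exact: (GRing.semilinear_linear hF).1. Qed.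

Lemma tpi_sum M N (s : seq (M * N)) : tpi s = \sum_(p <- s) tens p.1 p.2.
Proof.
elim: s => [|p s IH]; first by rewrite big_nil.
rewrite big_cons -IH; change (tpi (p :: s) = tadd (tpi [:: (p.1, p.2)]) (tpi s)).
by rewrite taddE; case: p.
Qed.

Lemma tliftE M N P (b : M -> N -> P) x : tlift b x = \sum_(p <- trepr x) b p.1 p.2.
Proof. by []. Qed.

Lemma tlift_pi M N P (b : M -> N -> P) s : bilinear_map b -> tlift b (tpi s) = tsum b s.
Proof. by move=> hb; exact: (treprP s hb). Qed.

Lemma tlift_tens M N P (b : M -> N -> P) m n : bilinear_map b -> tlift b (tens m n) = b m n.
Proof. by move=> hb; rewrite /tens tlift_pi // /tsum big_seq1. Qed.

Lemma tlift_lin M N P (b : M -> N -> P) : bilinear_map b -> linear (tlift b).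
Proof.
move=> hb c x y; case: (tpi_surj x) => s ->; case: (tpi_surj y) => t ->.
change (tlift b (tadd (tscale c (tpi s)) (tpi t)) = c *: tlift b (tpi s) + tlift b (tpi t)).
by rewrite tscaleE taddE !tlift_pi // tsum_cat // tsum_scale.
Qed.

Lemma tlift_comp M N P Q (b : M -> N -> P) (F : P -> Q) x :
  linear F -> F (tlift b x) = tlift (fun m n => F (b m n)) x.
Proof. by move=> hF; rewrite !tliftE lin_sum. Qed.

Lemma tlift_param M N P Q (T : Q -> M -> N -> P) x :
  (forall m n, linear (fun v => T v m n)) -> linear (fun v => tlift (T v) x).
Proof.
move=> hT c u v; rewrite !tliftE scaler_sumr -big_split /=.
by apply: eq_bigr => p _; rewrite hT.
Qed.

Lemma tlift_ext M N P (b b' : M -> N -> P) x :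
  (forall m n, b m n = b' m n) -> tlift b x = tlift b' x.
Proof. by move=> h; rewrite !tliftE; apply: eq_bigr => p _; rewrite h. Qed.

Lemma tlift_addf M N P (b b' : M -> N -> P) x :
  tlift (fun m n => b m n + b' m n) x = tlift b x + tlift b' x.
Proof. by rewrite !tliftE big_split. Qed.

Lemma tlift_scalef M N P (b : M -> N -> P) c x :
  tlift (fun m n => c *: b m n) x = c *: tlift b x.
Proof. by rewrite !tliftE scaler_sumr. Qed.

Lemma tens_lin_l M N (n : N) : linear (fun m : M => tens m n).
Proof. by move=> c u v; rewrite tensDl tensZl. Qed.

Lemma tensDr M N (m : M) (n n' : N) : tens m (n + n') = tens m n + tens m n'.
Proof.
change (tpi [:: (m, n + n')] = tadd (tpi [:: (m, n)]) (tpi [:: (m, n')])).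
rewrite taddE /=; apply/tpi_eq => P b hb.
rewrite /tsum !big_cons !big_nil /= !addr0.
by rewrite (lin_add (hb.2 m)).
Qed.

Lemma tensZr M N (m : M) c (n : N) : tens m (c *: n) = c *: tens m n.
Proof.
change (tpi [:: (m, c *: n)] = tscale c (tpi [:: (m, n)])).
rewrite tscaleE /=; apply/tpi_eq => P b hb.
by rewrite /tsum !big_cons !big_nil /= !addr0 (lin_scale (hb.2 m)) (lin_scale (hb.1 n)).
Qed.

Lemma tens_lin_r M N (m : M) : linear (fun n : N => tens m n).
Proof. by move=> c u v; rewrite tensDr tensZr. Qed.

Lemma tens_bilin M N : bilinear_map (fun (m : M) (n : N) => tens m n).
Proof. by split=> [n|m]; [exact: tens_lin_l|exact: tens_lin_r]. Qed.

Lemma tlift_tens_id M N (x : tensor_type M N) : tlift (fun m n => tens m n) x = x.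
Proof.
case: (tpi_surj x) => s ->; rewrite tlift_pi; last exact: tens_bilin.
by rewrite tpi_sum.
Qed.

Lemma tensor_ext M N P (F G : tensor_type M N -> P) x :
  linear F -> linear G -> (forall m n, F (tens m n) = G (tens m n)) -> F x = G x.
Proof.
move=> hF hG h; rewrite -(tlift_tens_id x) !tlift_comp //.
exact: tlift_ext.
Qed.

Lemma lin_comp M N P (F : N -> P) (G : M -> N) :
  linear F -> linear G -> linear (fun x => F (G x)).
Proof. by move=> hF hG c u v; rewrite hG hF. Qed.

Lemma lin_id M : linear (fun x : M => x).
Proof. by []. Qed.


Definition trilin M N Q P (T : M -> N -> Q -> P) : Prop :=
  [/\ (forall q r, linear (fun p => T p q r)), (forall p r, linear (fun q => T p q r))
    & (forall p q, linear (T p q))].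

Lemma bil_nest (U : lmodType k) M N Q P (d : U -> tensor_type M N) (T : M -> N -> Q -> P) :
  linear d -> trilin T ->
  bilinear_map (fun u r => tlift (fun p q => T p q r) (d u)).
Proof.
move=> hd [h1 h2 h3]; split=> [r|u].
  apply: (lin_comp _ hd); apply: tlift_lin; split=> [q|p]; [exact: h1|exact: h2].
by apply: tlift_param => p q; exact: h3.
Qed.

Lemma bil_nest2 M (W : lmodType k) N Q P (d : W -> tensor_type N Q) (T : M -> N -> Q -> P) :
  linear d -> trilin T ->
  bilinear_map (fun p w => tlift (fun q r => T p q r) (d w)).
Proof.
move=> hd [h1 h2 h3]; split=> [w|p].
  by apply: tlift_param => q r; exact: h1.
apply: (lin_comp _ hd); apply: tlift_lin; split=> [r|q]; [exact: h2|exact: h3].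
Qed.

Lemma tassoc_tens A B C (t : tensor_type A B) (c : C) :
  tassoc (tens t c) = tlift (fun a b => tens a (tens b c)) t.
Proof.
rewrite /tassoc tlift_tens //; split=> [c'|t'].
  apply: tlift_lin; split=> [b|a]; first exact: tens_lin_l.
  by apply: (lin_comp (tens_lin_r a)); exact: tens_lin_l.
apply: tlift_param => a b; exact: (lin_comp (tens_lin_r a) (tens_lin_r b)).
Qed.

Lemma tassoc_lin A B C : linear (@tassoc k A B C).
Proof.
apply: tlift_lin; split=> [c'|t'].
  apply: tlift_lin; split=> [b|a]; first exact: tens_lin_l.
  by apply: (lin_comp (tens_lin_r a)); exact: tens_lin_l.
apply: tlift_param => a b; exact: (lin_comp (tens_lin_r a) (tens_lin_r b)).
Qed.

Lemma tmap_lin A B C D (f : A -> C) (g : B -> D) :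
  linear f -> linear g -> linear (tmap f g).
Proof.
move=> hf hg; apply: tlift_lin; split=> [b|a].
  exact: (lin_comp (tens_lin_l _) hf).
exact: (lin_comp (tens_lin_r _) hg).
Qed.

Lemma tmap_tens A B C D (f : A -> C) (g : B -> D) a b :
  linear f -> linear g -> tmap f g (tens a b) = tens (f a) (g b).
Proof.
move=> hf hg; rewrite /tmap tlift_tens //; split=> [b'|a'].
  exact: (lin_comp (tens_lin_l _) hf).
exact: (lin_comp (tens_lin_r _) hg).
Qed.

Lemma coassoc_fun A B C (U V W : lmodType k) P (d1 : U -> tensor_type A B)
  (d2 : V -> tensor_type U C)
  (d3 : W -> tensor_type B C) (d4 : V -> tensor_type A W) x (T : A -> B -> C -> P) :
  linear d1 -> linear d3 -> trilin T ->
  tassoc (tmap d1 (fun z => z) (d2 x)) = tmap (fun z => z) d3 (d4 x) ->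
  tlift (fun u r => tlift (fun p q => T p q r) (d1 u)) (d2 x)
  = tlift (fun p w => tlift (fun q r => T p q r) (d3 w)) (d4 x).
Proof.
move=> hd1 hd3 hT e.
pose L := tlift (fun p t => tlift (fun q r => T p q r) t).
have hbL : bilinear_map (fun p t => tlift (fun q r => T p q r) t).
  case: hT => h1 h2 h3; split=> [t|p].
    by apply: tlift_param => q r; exact: h1.
  by apply: tlift_lin; split=> [r|q]; [exact: h2|exact: h3].
have hL : linear L by apply: tlift_lin.
have LE : forall p q r, L (tens p (tens q r)) = T p q r.
  move=> p q r; rewrite /L tlift_tens // tlift_tens //.
  by case: hT => h1 h2 h3; split=> [r'|q']; [exact: h2|exact: h3].
have := congr1 L e; rewrite /tmap.
rewrite (tlift_comp _ _ (@tassoc_lin _ _ _)) (tlift_comp _ _ hL) (tlift_comp _ _ hL).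
move=> e'; apply: etrans (etrans _ e') _.
  apply: tlift_ext => u r.
  rewrite tassoc_tens (tlift_comp _ _ hL); apply: tlift_ext => p q; by rewrite LE.
apply: tlift_ext => p w; rewrite /L tlift_tens //.
Qed.


Lemma lin_tensl (U M N : lmodType k) (F : U -> M) (n : N) :
  linear F -> linear (fun x => tens (F x) n).
Proof. move=> h; exact: (lin_comp (tens_lin_l n) h). Qed.
Lemma lin_tensr (U M N : lmodType k) (m : M) (F : U -> N) :
  linear F -> linear (fun x => tens m (F x)).
Proof. move=> h; exact: (lin_comp (tens_lin_r m) h). Qed.
Lemma lin_tlift (U M N P : lmodType k) (b : M -> N -> P) (F : U -> tensor_type M N) :
  bilinear_map b -> linear F -> linear (fun x => tlift b (F x)).
Proof. move=> hb h; exact: (lin_comp (tlift_lin hb) h). Qed.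
Lemma lin_bill (U M N P : lmodType k) (b : M -> N -> P) (F : U -> M) n :
  bilinear_map b -> linear F -> linear (fun x => b (F x) n).
Proof. move=> hb h; exact: (lin_comp (hb.1 n) h). Qed.
Lemma lin_bilr (U M N P : lmodType k) (b : M -> N -> P) m (F : U -> N) :
  bilinear_map b -> linear F -> linear (fun x => b m (F x)).
Proof. move=> hb h; exact: (lin_comp (hb.2 m) h). Qed.
Lemma lin_scalk (U M : lmodType k) (F : U -> k^o) (m : M) :
  linear F -> linear (fun x => (F x : k) *: m).
Proof. by move=> h c u v; rewrite h scalerDl scalerA. Qed.
Lemma lin_scalr (U M : lmodType k) c (F : U -> M) :
  linear F -> linear (fun x => c *: F x).
Proof. by move=> h a u v; rewrite h scalerDr !scalerA mulrC. Qed.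
Lemma lin_app (U M N : lmodType k) (f : {linear M -> N}) (F : U -> M) :
  linear F -> linear (fun x => f (F x)).
Proof. move=> h; exact: (lin_comp (linearP f) h). Qed.

Section Tmul.
Variables (A B : lmodType k) (muA : A -> A -> A) (muB : B -> B -> B).
Hypotheses (hA : bilinear_map muA) (hB : bilinear_map muB).

Lemma tmul_inner_bil y :
  bilinear_map (fun a b => tlift (fun c d => tens (muA a c) (muB b d)) y).
Proof.
split=> [b|a]; apply: tlift_param => c d.
  exact: (lin_comp (tens_lin_l _) (hA.1 c)).
exact: (lin_comp (tens_lin_r _) (hB.1 d)).
Qed.

Lemma tmul_tens_bil a b :
  bilinear_map (fun c d => tens (muA a c) (muB b d)).
Proof.
split=> [d|c]; first exact: (lin_comp (tens_lin_l _) (hA.2 a)).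
exact: (lin_comp (tens_lin_r _) (hB.2 b)).
Qed.

Lemma tmul_lin_l y : linear (fun x => tmul muA muB x y).
Proof. exact: (tlift_lin (tmul_inner_bil y)). Qed.

Lemma tmul_lin_r x : linear (tmul muA muB x).
Proof.
apply: tlift_param => a b; exact: (tlift_lin (tmul_tens_bil a b)).
Qed.

Lemma tmul_tens a b c d : tmul muA muB (tens a b) (tens c d) = tens (muA a c) (muB b d).
Proof. by rewrite /tmul tlift_tens ?tlift_tens //; [exact: tmul_tens_bil|exact: tmul_inner_bil]. Qed.

Lemma tmul_tens_l a b y :
  tmul muA muB (tens a b) y = tlift (fun c d => tens (muA a c) (muB b d)) y.
Proof. by rewrite /tmul tlift_tens //; exact: tmul_inner_bil. Qed.

Lemma tmulA : associative muA -> associative muB -> associative (tmul muA muB).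
Proof.
move=> aA aB x y z.
pose F1 := fun x => tmul muA muB x (tmul muA muB y z).
pose G1 := fun x => tmul muA muB (tmul muA muB x y) z.
suff : G1 x = F1 x by [].
apply: tensor_ext => [||a b].
- exact: (lin_comp (tmul_lin_l _) (tmul_lin_l _)).
- exact: tmul_lin_l.
rewrite /F1 /G1.
pose F2 := fun y => tmul muA muB (tens a b) (tmul muA muB y z).
pose G2 := fun y => tmul muA muB (tmul muA muB (tens a b) y) z.
suff : G2 y = F2 y by [].
apply: tensor_ext => [||c d].
- exact: (lin_comp (tmul_lin_l _) (tmul_lin_r _)).
- exact: (lin_comp (tmul_lin_r _) (tmul_lin_l _)).
rewrite /F2 /G2 tmul_tens.
pose F3 := fun z => tmul muA muB (tens a b) (tmul muA muB (tens c d) z).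
pose G3 := fun z => tmul muA muB (tens (muA a c) (muB b d)) z.
suff : G3 z = F3 z by [].
apply: tensor_ext => [||e g].
- exact: tmul_lin_r.
- exact: (lin_comp (tmul_lin_r _) (tmul_lin_r _)).
by rewrite /F3 /G3 !tmul_tens aA aB.
Qed.

Lemma tmul1t uA uB : left_id uA muA -> left_id uB muB ->
  forall y, tmul muA muB (tens uA uB) y = y.
Proof.
move=> lA lB y.
pose F := fun y => tmul muA muB (tens uA uB) y.
suff : F y = (fun t => t) y by [].
apply: tensor_ext => [||c d]; [exact: tmul_lin_r|exact: lin_id|].
by rewrite /F tmul_tens lA lB.
Qed.

Lemma tmult1 uA uB : right_id uA muA -> right_id uB muB ->
  forall y, tmul muA muB y (tens uA uB) = y.
Proof.
move=> lA lB y.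
pose F := fun y => tmul muA muB y (tens uA uB).
suff : F y = (fun t => t) y by [].
apply: tensor_ext => [||c d]; [exact: tmul_lin_l|exact: lin_id|].
by rewrite /F tmul_tens lA lB.
Qed.

End Tmul.
End TensLib.

Ltac bilfact := fail.
Ltac linfact := fail.

Ltac linsolve :=
  cbv beta;
  match goal with
  | |- GRing.linear_for _ (fun x => x) => exact: lin_id
  | |- GRing.linear_for _ (fun x => tens (@?F x) ?n) => apply: (lin_tensl n); linsolve
  | |- GRing.linear_for _ (fun x => tens ?m (@?F x)) => apply: (lin_tensr m); linsolve
  | |- GRing.linear_for _ (fun x => tlift ?b (@?F x)) => apply: (lin_tlift (b := b)); [bilsolve | linsolve]
  | |- GRing.linear_for _ (fun x => tlift (@?T x) ?t) => apply: tlift_param => ? ?; linsolve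
  | |- GRing.linear_for _ (fun x => tmul ?mA ?mB (@?F x) ?y) =>
      apply: (lin_comp (tmul_lin_l _ _ y)); [bilfact | bilfact | linsolve]
  | |- GRing.linear_for _ (fun x => tmul ?mA ?mB ?y (@?F x)) =>
      apply: (lin_comp (tmul_lin_r _ _ y)); [bilfact | bilfact | linsolve]
  | |- GRing.linear_for _ (fun x => GRing.scale (@?F x) ?m) => apply: (lin_scalk (F := F)); linsolve
  | |- GRing.linear_for _ (fun x => GRing.scale ?c (@?F x)) => apply: (lin_scalr c); linsolve
  | |- GRing.linear_for _ (fun x => ?b (@?F x) ?n) => apply: (lin_bill (b := b) n); [bilfact | linsolve]
  | |- GRing.linear_for _ (fun x => ?b ?m (@?F x)) => apply: (lin_bilr (b := b) m); [bilfact | linsolve]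
  | |- GRing.linear_for _ (fun x => ?f (@?F x)) =>
      apply: (lin_comp (F := f)); [first [exact: linearP | linfact] | linsolve]
  | |- GRing.linear_for _ (tlift ?b) => apply: tlift_lin; bilsolve
  | |- GRing.linear_for _ (tmul ?mA ?mB ?y) => apply: tmul_lin_r; bilfact
  | |- GRing.linear_for _ (tens ?m) => exact: tens_lin_r
  | |- GRing.linear_for _ _ => first [exact: linearP | linfact]
  | |- GRing.linear_for _ (?b ?m) => apply: (fun h => (h : bilinear_map b).2 m); bilfact
  end
with bilsolve :=
  cbv beta;
  match goal with
  | |- bilinear_map _ => split => ? ; linsolve
  | |- trilin _ => split => ? ? ; linsolve
  end.


Unset Implicit Arguments.

Section Hopf.
Variables (k : comPzRingType) (G : groupType)
  (H : G -> lmodType k) (mu : forall g, H g -> H g -> H g) (one : forall g, H g)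
  (Delta : forall g h : G, {linear H (g * h)%g -> tensor_type (H g) (H h)})
  (eps : {linear H 1%g -> GRing.regular k})
  (S : forall g : G, {linear H (g^-1)%g -> H g}).
Hypothesis HH : @is_hopf_G_coalgebra k G H mu one Delta eps S.

Lemma mu_bil g : bilinear_map (mu g).
Proof. by case: (hc_alg HH g). Qed.
Lemma muA g : associative (mu g).
Proof. by case: (hc_alg HH g). Qed.
Lemma mu1 g : left_id (one g) (mu g).
Proof. by case: (hc_alg HH g). Qed.
Lemma mur1 g : right_id (one g) (mu g).
Proof. by case: (hc_alg HH g). Qed.

Lemma trI {g h : G} (e1 e2 : g = h) (x : H g) : tr H e1 x = tr H e2 x.
Proof. by rewrite (eq_irrelevance e1 e2). Qed.
Lemma trT {g h l : G} (e1 : g = h) (e2 : h = l) (x : H g) :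
  tr H e2 (tr H e1 x) = tr H (etrans e1 e2) x.
Proof. by case: l / e2; case: h / e1. Qed.
Lemma tr_id {g : G} (e : g = g) (x : H g) : tr H e x = x.
Proof. by rewrite (trI e erefl). Qed.
Lemma tr_lin {g h : G} (e : g = h) : linear (tr H e).
Proof. by case: h / e. Qed.
Lemma tr_one {g h : G} (e : g = h) : tr H e (one g) = one h.
Proof. by case: h / e. Qed.

Ltac bilfact ::= first [exact: mu_bil].
Ltac linfact ::= first [exact: tr_lin].

Definition D {g h u : G} (e : (g * h)%g = u) (x : H u) : tensor_type (H g) (H h) :=
  Delta g h (tr H (esym e) x).

Lemma D_lin {g h u} (e : (g * h)%g = u) : linear (D e).
Proof. rewrite /D; linsolve. Qed.
Ltac linfact ::= first [exact: tr_lin | exact: D_lin].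


Lemma tr_mu {g h : G} (e : g = h) x y : tr H e (mu g x y) = mu h (tr H e x) (tr H e y).
Proof. by case: h / e. Qed.

Lemma D_tr {g h u u' : G} (e : (g * h)%g = u) (e' : (g * h)%g = u') (e1 : u' = u) x :
  D e (tr H e1 x) = D e' x.
Proof. by case: u / e1 e; move=> e; rewrite (eq_irrelevance e e'). Qed.

Lemma D_irr {g h u : G} (e e' : (g * h)%g = u) x : D e x = D e' x.
Proof. by rewrite (eq_irrelevance e e'). Qed.

Lemma D_ch1 (P : lmodType k) {g g' h u : G} (e1 : g = g') (e : (g * h)%g = u)
  (e' : (g' * h)%g = u) x (B : H g' -> H h -> P) :
  tlift (fun p q => B (tr H e1 p) q) (D e x) = tlift B (D e' x).
Proof. subst g'; by rewrite (eq_irrelevance e e'). Qed.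

Lemma D_ch2 (P : lmodType k) {g h h' u : G} (e1 : h = h') (e : (g * h)%g = u)
  (e' : (g * h')%g = u) x (B : H g -> H h' -> P) :
  tlift (fun p q => B p (tr H e1 q)) (D e x) = tlift B (D e' x).
Proof. subst h'; by rewrite (eq_irrelevance e e'). Qed.

Lemma D_refl {g h : G} (e : (g * h)%g = (g * h)%g) x : D e x = Delta g h x.
Proof. by rewrite /D tr_id. Qed.

Lemma D_coassoc (P : lmodType k) {g h l u v w : G} (e1 : (g * h)%g = u) (e2 : (u * l)%g = v)
  (e3 : (h * l)%g = w) (e4 : (g * w)%g = v) x (T : H g -> H h -> H l -> P) :
  trilin T ->
  tlift (fun p' r => tlift (fun p q => T p q r) (D e1 p')) (D e2 x)
  = tlift (fun p w' => tlift (fun q r => T p q r) (D e3 w')) (D e4 x).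
Proof.
move=> hT; case: u / e1 e2 => e2; case: w / e3 e4 => e4; case: v / e2 e4 x => e4 x.
apply: coassoc_fun => //; try exact: D_lin.
have E1 : D (erefl (g * h)%g) = Delta g h :> (_ -> _) by apply: funext => p; exact: D_refl.
have E3 : D (erefl (h * l)%g) = Delta h l :> (_ -> _) by apply: funext => p; exact: D_refl.
rewrite E1 E3 D_refl /D (trI (esym e4) (esym (mulgA g h l))).
exact: (hc_coassoc HH).
Qed.

Lemma D_counit_r {g h u : G} (e : (g * h)%g = u) (e1 : h = 1%g) (e2 : g = u) (x : H u) :
  tlift (fun p q => (eps (tr H e1 q) : k) *: p) (D e x) = tr H (esym e2) x.
Proof.
case: u / e2 e x => e x; subst h; rewrite tr_id -{2}(hc_counit_r HH x) /D.
by congr (tlift _ (Delta g 1 _)); exact: trI.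
Qed.

Lemma D_counit_l {g h u : G} (e : (g * h)%g = u) (e1 : g = 1%g) (e2 : h = u) (x : H u) :
  tlift (fun p q => (eps (tr H e1 p) : k) *: q) (D e x) = tr H (esym e2) x.
Proof.
case: u / e2 e x => e x; subst g; rewrite tr_id -{2}(hc_counit_l HH x) /D.
by congr (tlift _ (Delta 1 h _)); exact: trI.
Qed.

Lemma D_antil {g u : G} (e : ((g^-1) * g)%g = u) (e2 : u = 1%g) (x : H u) :
  tlift (fun p q => mu g (S g p) q) (D e x) = (eps (tr H e2 x) : k) *: one g.
Proof.
case: u / e e2 x => e2 x.
by rewrite -(hc_antipode_l HH g (tr H e2 x)) D_refl trT tr_id.
Qed.

Lemma D_antir {g u : G} (e : (g * (g^-1))%g = u) (e2 : u = 1%g) (x : H u) :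
  tlift (fun p q => mu g p (S g q)) (D e x) = (eps (tr H e2 x) : k) *: one g.
Proof.
case: u / e e2 x => e2 x.
by rewrite -(hc_antipode_r HH g (tr H e2 x)) D_refl trT tr_id.
Qed.

Lemma D_mul {g h u : G} (e : (g * h)%g = u) x y :
  D e (mu u x y) = tmul (mu g) (mu h) (D e x) (D e y).
Proof. case: u / e x y => x y; rewrite !D_refl; exact: (hc_Delta_mul HH). Qed.

Lemma D_one {g h u : G} (e : (g * h)%g = u) : D e (one u) = tens (one g) (one h).
Proof. case: u / e; rewrite !D_refl; exact: (hc_Delta_one HH). Qed.


Section AC.
Variables a b : G.

Definition Fq (q : H ((a * b)^-1)%g) : tensor_type (H a) (H b) := Delta a b (S (a * b)%g q).
Definition Gm (q : H ((a * b)^-1)%g) : tensor_type (H a) (H b) :=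
  tlift (fun q1 q2 => tens (S a q2) (S b q1)) (D (esym (invgM a b)) q).

Lemma Fq_lin : linear Fq.
Proof. rewrite /Fq; linsolve. Qed.
Lemma Gm_lin : linear Gm.
Proof. rewrite /Gm; linsolve. Qed.

Notation mulT := (tmul (mu a) (mu b)).
Ltac linfact ::= first [exact: tr_lin | exact: D_lin | exact: Fq_lin | exact: Gm_lin].

Lemma E1 (r : H ((a * b)^-1 * (a * b))%g) :
  tlift (fun q p => mulT (Fq q) (Delta a b p)) (D (erefl _) r)
  = (eps (tr H (mulVg (a * b)%g) r) : k) *: tens (one a) (one b).
Proof.
transitivity (tlift (fun q p => Delta a b (mu (a * b)%g (S (a * b)%g q) p)) (D (erefl _) r)).
  by apply: tlift_ext => q p; rewrite /Fq (hc_Delta_mul HH).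
rewrite -(tlift_comp _ _ (linearP (Delta a b))) (D_antil _ (mulVg (a * b)%g)).
by rewrite linearZ /= (hc_Delta_one HH).
Qed.


Lemma E2 (r : H ((a * b) * (a * b)^-1)%g) :
  tlift (fun p s => mulT (Delta a b p) (Gm s)) (D (erefl _) r)
  = (eps (tr H (mulgV (a * b)%g) r) : k) *: tens (one a) (one b).
Proof.
pose e0 := esym (invgM a b).
transitivity (tlift (fun p s => tlift (fun p1 p2 => tlift (fun q1 q2 => tens (mu a p1 (S a q2)) (mu b p2 (S b q1)))
                    (D e0 s)) (D (erefl (a * b)%g) p)) (D (erefl _) r)).
  apply: tlift_ext => p s; rewrite D_refl /tmul; apply: tlift_ext => p1 p2.
  rewrite /Gm (tlift_comp _ _ (_ : linear _)); last by linsolve.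
  apply: tlift_ext => q1 q2; rewrite tlift_tens; [by [] | bilsolve].
rewrite (D_coassoc _ _ _ (erefl (b * (a * b)^-1)%g) (mulgA a b (a * b)^-1)%g); last by bilsolve.
have e2' : ((b * b^-1) * a^-1)%g = (b * (a * b)^-1)%g by rewrite invgM mulgA.
have e2'' : (a^-1 = b * (a * b)^-1)%g by rewrite invgM mulgA mulgV mul1g.
transitivity (tlift (fun p1 w => tens (mu a p1 (S a (tr H (esym e2'') w))) (one b))
   (D (mulgA a b (a * b)^-1)%g r)).
  apply: tlift_ext => p1 w.
  rewrite -(D_coassoc _ (erefl (b * b^-1)%g) e2' e0 (erefl _)); last by bilsolve.
  transitivity (tlift (fun t q2 => (eps (tr H (mulgV b) t) : k) *: tens (mu a p1 (S a q2)) (one b))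
                 (D e2' w)).
    apply: tlift_ext => t q2.
    rewrite -(tlift_comp _ _ (_ : linear (fun y => tens (mu a p1 (S a q2)) y))); last by linsolve.
    by rewrite (D_antir _ (mulgV b)) tensZr.
  transitivity ((fun y => tens (mu a p1 (S a y)) (one b))
                 (tlift (fun t q2 => (eps (tr H (mulgV b) t) : k) *: q2) (D e2' w))).
    rewrite (tlift_comp _ _ (_ : linear (fun y => tens (mu a p1 (S a y)) (one b)))); last by linsolve.
    by apply: tlift_ext => t q2; rewrite /= linearZ /= (lin_scale ((mu_bil a).2 p1)) tensZl.
  by rewrite /= (D_counit_l _ (mulgV b) e2'').
have e' : (a * a^-1 = (a * b) * (a * b)^-1)%g by rewrite !mulgV.
rewrite (D_ch2 _ (esym e2'') _ e' r (fun p1 w => tens (mu a p1 (S a w)) (one b))).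
rewrite -(tlift_comp _ _ (_ : linear (fun y => tens y (one b)))); last by linsolve.
rewrite (D_antir _ (mulgV (a * b)%g)) tensZl.
by [].
Qed.

Lemma AC (q : H ((a * b)^-1)%g) : Fq q = Gm q.
Proof.
set u := (a * b)%g.
have e : (u^-1 * (u * u^-1) = u^-1)%g by rewrite mulgV mulg1.
have e2 : (u^-1 * u * u^-1 = u^-1)%g by rewrite mulVg mul1g.
have hR := tmul_lin_r (mu_bil a) (mu_bil b).
have hL := tmul_lin_l (mu_bil a) (mu_bil b).
transitivity (Fq (tr H (esym (erefl u^-1%g)) q)) => //.
rewrite -(D_counit_r e (mulgV u) (erefl _) q) (tlift_comp _ _ Fq_lin).
transitivity (tlift (fun q1 q2 => tlift (fun p s => mulT (Fq q1) (mulT (Delta a b p) (Gm s)))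
                       (D (erefl (u * u^-1)%g) q2)) (D e q)).
  apply: tlift_ext => q1 q2.
  rewrite -(tlift_comp _ _ (hR _)) E2 (lin_scale (hR _)) (tmult1 (mu_bil a) (mu_bil b)).
  - exact: (lin_scale Fq_lin).
  - exact: mur1.
  - exact: mur1.
rewrite -(D_coassoc _ (erefl (u^-1 * u)%g) e2); last by bilsolve.
transitivity (tlift (fun p' r => (eps (tr H (mulVg u) p') : k) *: Gm r) (D e2 q)).
  apply: tlift_ext => p' r.
  transitivity ((fun y => mulT y (Gm r)) (tlift (fun q1 p => mulT (Fq q1) (Delta a b p)) (D (erefl _) p'))).
    rewrite (tlift_comp _ _ (hL _)); apply: tlift_ext => q1 p.
    by rewrite (tmulA (mu_bil a) (mu_bil b) (muA a) (muA b)).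
  rewrite /= E1 (lin_scale (hL _)) (tmul1t (mu_bil a) (mu_bil b)) //; exact: mu1.
transitivity (Gm (tlift (fun p' r => (eps (tr H (mulVg u) p') : k) *: r) (D e2 q))).
  by rewrite (tlift_comp _ _ Gm_lin); apply: tlift_ext => p' r; rewrite (lin_scale Gm_lin).
by rewrite (D_counit_l _ (mulVg u) (erefl _)).
Qed.

End AC.

Lemma HI (a0 b d : G) (ed : d = (a0 * b)%g) (e' : (b * d^-1 = a0^-1)%g) (w : H (b * d^-1)%g) :
  tlift (fun m1 q => tlift (fun s t => tens s (mu b m1 t)) (Delta a0 b (tr H ed (S d q))))
    (Delta b d^-1 w)
  = tens (S a0 (tr H e' w)) (one b).
Proof.
subst d.
pose e0 := esym (invgM a0 b).
have e2 : ((b * b^-1) * a0^-1)%g = (b * (a0 * b)^-1)%g by rewrite invgM mulgA.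
have e2'' : (a0^-1 = b * (a0 * b)^-1)%g by rewrite invgM mulgA mulgV mul1g.
transitivity (tlift (fun m1 q => tlift (fun q1 q2 => tens (S a0 q2) (mu b m1 (S b q1))) (D e0 q))
                (D (erefl (b * (a0 * b)^-1)%g) w)).
  rewrite D_refl; apply: tlift_ext => m1 q.
  have -> : Delta a0 b (tr H (erefl (a0 * b)%g) (S (a0 * b)%g q)) = Gm a0 b q by exact: AC.
  rewrite /Gm (tlift_comp _ _ (_ : linear _)); last by linsolve.
  apply: tlift_ext => q1 q2; rewrite tlift_tens; [by [] | bilsolve].
rewrite -(D_coassoc _ (erefl (b * b^-1)%g) e2 e0 (erefl _)); last by bilsolve.
transitivity (tlift (fun t q2 => (eps (tr H (mulgV b) t) : k) *: tens (S a0 q2) (one b)) (D e2 w)).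
  apply: tlift_ext => t q2.
  rewrite -(tlift_comp _ _ (_ : linear (fun y => tens (S a0 q2) y))); last by linsolve.
  by rewrite (D_antir _ (mulgV b)) tensZr.
transitivity ((fun y => tens (S a0 y) (one b))
                 (tlift (fun t q2 => (eps (tr H (mulgV b) t) : k) *: q2) (D e2 w))).
  rewrite (tlift_comp _ _ (_ : linear (fun y => tens (S a0 y) (one b)))); last by linsolve.
  by apply: tlift_ext => t q2; rewrite /= linearZ /= tensZl.
by rewrite /= (D_counit_l _ (mulgV b) e2'') (trI (esym e2'') e').
Qed.

Section Module.
Variables (X : Type) (a : ractType G X) (f : X -> G) (M : X -> lmodType k)
  (mact : forall x, M x -> H (f x) -> M x)
  (rho : forall x g, {linear M (a x g) -> tensor_type (M x) (H g)}).
Hypothesis HM : @is_hopf_module k G H mu one Delta eps X a f M mact rho.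

Lemma mact_bil x : bilinear_map (mact x).
Proof. exact: (hm_mod_bilin HM). Qed.

Ltac bilfact ::= first [exact: mu_bil | exact: mact_bil].

Lemma trMI {x y : X} (e1 e2 : x = y) m : tr M e1 m = tr M e2 m.
Proof. by rewrite (Prop_irrelevance e1 e2). Qed.
Lemma trMT {x y z : X} (e1 : x = y) (e2 : y = z) m : tr M e2 (tr M e1 m) = tr M (etrans e1 e2) m.
Proof. by case: z / e2; case: y / e1. Qed.
Lemma trM_id {x : X} (e : x = x) m : tr M e m = m.
Proof. by rewrite (trMI e erefl). Qed.
Lemma trM_lin {x y : X} (e : x = y) : linear (tr M e).
Proof. by case: y / e. Qed.
Lemma tr_mact {x y : X} (e : x = y) m h :
  tr M e (mact x m h) = mact y (tr M e m) (tr H (congr1 f e) h).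
Proof. by case: y / e. Qed.
Lemma trHf {x y : X} (e : x = y) (h : H (f x)) :
  tr (fun z => H (f z)) e h = tr H (congr1 f e) h.
Proof. by case: y / e. Qed.

Ltac linfact ::= first [exact: tr_lin | exact: D_lin | exact: trM_lin].

Lemma rho_ch (P : lmodType k) x (g1 g2 : G) (eg : g1 = g2) (m : M (a x g1)) (B : M x -> H g2 -> P) :
  tlift (fun p q => B p (tr H eg q)) (rho x g1 m) = tlift B (rho x g2 (tr M (congr1 (a x) eg) m)).
Proof. by case: g2 / eg B. Qed.

Lemma M_coassoc (P : lmodType k) x g h (m : M (a (a x g) h)) (T : M x -> H g -> H h -> P) :
  trilin T ->
  tlift (fun u r => tlift (fun p q => T p q r) (rho x g u)) (rho (a x g) h m)
  = tlift (fun p w => tlift (fun q r => T p q r) (D (erefl (g * h)%g) w))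
      (rho x (g * h)%g (tr M (ractM a x g h) m)).
Proof.
move=> hT.
apply: (@coassoc_fun _ _ _ _ _ _ _ _ (rho x g) (rho (a x g) h) (D (erefl (g * h)%g))
   (fun m => rho x (g * h)%g (tr M (ractM a x g h) m)) m T (linearP _) (D_lin _) hT).
have E : D (erefl (g * h)%g) = Delta g h :> (_ -> _) by apply: funext => p; exact: D_refl.
rewrite E; exact: (hm_coassoc HM).
Qed.

Definition Pc {y u : X} (e : a y (f y)^-1%g = u) (n : M u) : M y :=
  tlift (fun p q => mact y p (S (f y) q)) (rho y (f y)^-1%g (tr M (esym e) n)).

Lemma Pc_lin {y u} (e : a y (f y)^-1%g = u) : linear (Pc e).
Proof. rewrite /Pc; linsolve. Qed.

Lemma PcCo y b u (e1 : a (a y b) (f (a y b))^-1%g = u) (e2 : a y (f y)^-1%g = u) (n : M u) :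
  rho y b (Pc e1 n) = tens (Pc e2 n) (one b).
Proof.
rewrite /Pc (tlift_comp _ _ (linearP (rho y b))).
transitivity (tlift (fun p q => tlift (fun m0 m1 => tlift (fun s t => tens (mact y m0 s) (mu b m1 t))
     (Delta (f y) b (tr H (hm_f HM y b) (S (f (a y b)) q)))) (rho y b p))
   (rho (a y b) (f (a y b))^-1%g (tr M (esym e1) n))).
  apply: tlift_ext => p q; exact: (hm_compat HM).
rewrite (M_coassoc _ _ _ _ _ (fun m0 m1 q => tlift (fun s t => tens (mact y m0 s) (mu b m1 t))
     (Delta (f y) b (tr H (hm_f HM y b) (S (f (a y b)) q))))); last by bilsolve.
have e' : (b * (f (a y b))^-1 = (f y)^-1)%g by rewrite (hm_f HM) invgM mulgA mulgV mul1g.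
transitivity (tlift (fun m0 w => tens (mact y m0 (S (f y) (tr H e' w))) (one b))
   (rho y (b * (f (a y b))^-1)%g (tr M (ractM a y b _) (tr M (esym e1) n)))).
  apply: tlift_ext => m0 w.
  pose Lm := tlift (fun s (t' : H b) => tens (mact y m0 s) t').
  have hLm : linear Lm by rewrite /Lm; linsolve.
  transitivity (Lm (tlift (fun m1 q => tlift (fun s t => tens s (mu b m1 t))
       (Delta (f y) b (tr H (hm_f HM y b) (S (f (a y b)) q)))) (D (erefl _) w))).
    rewrite (tlift_comp _ _ hLm); apply: tlift_ext => m1 q.
    rewrite (tlift_comp _ _ hLm); apply: tlift_ext => s t.
    by rewrite /Lm tlift_tens //; bilsolve.
  by rewrite D_refl (HI _ _ _ (hm_f HM y b) e') /Lm tlift_tens //; bilsolve.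
rewrite (rho_ch _ y _ _ e' _ (fun m0 w => tens (mact y m0 (S (f y) w)) (one b))).
rewrite -(tlift_comp _ _ (tens_lin_l (one b))) !trMT.
by rewrite (trMI _ (esym e2)).
Qed.

Lemma cval_tr (O : orbits a) (c : coinv one rho O) (y1 y2 : osub O)
  (e : proj1_sig y1 = proj1_sig y2) : cval c y2 = tr M e (cval c y1).
Proof.
case: y1 y2 e => [y1 p1] [y2 p2] /= e.
case: y2 / e p2 => p2; by rewrite (Prop_irrelevance p1 p2).
Qed.

Lemma hz x (yO : osub (orb a x)) :
  a (proj1_sig yO) (f (proj1_sig yO))^-1%g = a x (f x)^-1%g.
Proof.
case: yO => y /= [g0 ->].
by rewrite (hm_f HM) (ractM a) invgM mulgA mulgV mul1g.
Qed.

Definition Pfam x (n : M (a x (f x)^-1%g)) : coinv one rho (orb a x) :=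
  @CoInv _ _ _ _ _ _ one rho (orb a x) (fun yO => Pc (hz x yO) n)
    (fun yO g => PcCo (proj1_sig yO) g _ (hz x (oact yO g)) (hz x yO) n).

Lemma Pfam_lin x : linear (Pfam x).
Proof.
move=> c n n'; apply: coinv_eq => yO /=.
by rewrite (Pc_lin (hz x yO)).
Qed.

Lemma ez x : a (a x (f x)^-1%g) (f x) = x.
Proof. by rewrite (ractM a) mulVg (ract1 a). Qed.

Definition Q x (m : M x) : tensor_type (coinv one rho (orb a x)) (H (f x)) :=
  tlift (fun n h => tens (Pfam x n) h) (rho (a x (f x)^-1%g) (f x) (tr M (esym (ez x)) m)).

Definition Phi x (t : tensor_type (coinv one rho (orb a x)) (H (f x))) : M x :=
  tlift (fun (c : coinv one rho (orb a x)) (h : H (f x)) => mact x (cval c (xin a x)) h) t.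

Lemma Pfam_linE x : linear (Pfam x). Proof. exact: Pfam_lin. Qed.
Ltac linfact ::= first [exact: tr_lin | exact: D_lin | exact: trM_lin | exact: Pfam_lin].

Lemma Phi_bil x : bilinear_map (fun (c : coinv one rho (orb a x)) (h : H (f x)) =>
   mact x (cval c (xin a x)) h).
Proof.
split=> [h|c]; last exact: (mact_bil x).2.
by move=> r u v /=; rewrite (mact_bil x).1.
Qed.

Lemma Phi_lin x : linear (Phi x).
Proof. exact: tlift_lin (Phi_bil x). Qed.

Lemma Q_lin x : linear (Q x).
Proof. rewrite /Q; linsolve. Qed.

Lemma PhiQ x (m : M x) : Phi x (Q x m) = m.
Proof.
set g := f x.
rewrite /Q (tlift_comp _ _ (Phi_lin x)).
transitivity (tlift (fun n h => tlift (fun p q => mact x p (mu g (S g q) h)) (rho x g^-1%g n))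
   (rho (a x g^-1%g) g (tr M (esym (ez x)) m))).
  apply: tlift_ext => n h; rewrite /Phi tlift_tens; last exact: Phi_bil.
  rewrite /= /Pc trM_id (tlift_comp _ _ (_ : linear (fun v => mact x v h))); last by linsolve.
  by apply: tlift_ext => p q; rewrite (hm_mod_assoc HM).
rewrite (M_coassoc _ _ _ _ _ (fun p q h => mact x p (mu g (S g q) h))); last by bilsolve.
transitivity (tlift (fun p w => (eps (tr H (mulVg g) w) : k) *: p)
   (rho x (g^-1 * g)%g (tr M (ractM a x g^-1%g g) (tr M (esym (ez x)) m)))).
  apply: tlift_ext => p w.
  rewrite -(tlift_comp _ _ (_ : linear (fun v => mact x p v))); last by linsolve.
  rewrite (D_antil _ (mulVg g)) (lin_scale ((mact_bil x).2 p)) (hm_mod_unit HM) //.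
rewrite (rho_ch _ x _ _ (mulVg g) _ (fun p w => (eps w : k) *: p)) !trMT.
by rewrite (trMI _ (esym (ract1 a x))) (hm_counit HM).
Qed.

Lemma Pfam_mact x (c : coinv one rho (orb a x)) (p : H (f (a x (f x)^-1%g)))
  (e1 : f (a x (f x)^-1%g) = 1%g) :
  Pfam x (mact _ (cval c (oact (xin a x) (f x)^-1%g)) p) = (eps (tr H e1 p) : k) *: c.
Proof.
apply: coinv_eq => yO /=.
set z := a x (f x)^-1%g.
set y := proj1_sig yO.
set k0 := ((f y)^-1)%g.
have e := hz x yO; rewrite -/y -/z in e.
rewrite /Pc (trMI _ (esym e)) tr_mact.
rewrite -(cval_tr _ c (oact (xin a x) (f x)^-1%g) (oact yO k0) (esym e)).
rewrite (hm_compat HM) (cvalP c yO k0) tlift_tens; last by bilsolve.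
set p'' := tr H (hm_f HM y k0) _.
transitivity (tlift (fun s t => mact y (cval c yO) (mu (f y) s (S (f y) t))) (Delta (f y) k0 p'')).
  rewrite (tlift_comp _ _ (_ : linear (tlift (fun p q => mact y p (S (f y) q))))); last by linsolve.
  apply: tlift_ext => s t; rewrite tlift_tens; last by bilsolve.
  by rewrite (mu1 k0) (hm_mod_assoc HM).
rewrite -(tlift_comp _ _ (_ : linear (fun v => mact y (cval c yO) v))); last by linsolve.
rewrite -(D_refl (erefl _)) (D_antir _ (mulgV (f y))) (lin_scale ((mact_bil y).2 _)) (hm_mod_unit HM).
by rewrite /p'' !trT (trI _ e1).
Qed.

Lemma QPhi x (t : tensor_type (coinv one rho (orb a x)) (H (f x))) : Q x (Phi x t) = t.
Proof.
apply: (tensor_ext (F := fun t => Q x (Phi x t)) (G := fun t => t)) => [||c h].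
- exact: (lin_comp (Q_lin x) (Phi_lin x)).
- exact: lin_id.
set g := f x; set z := a x g^-1%g.
rewrite /Phi tlift_tens; last exact: Phi_bil.
rewrite /Q tr_mact.
rewrite -(cval_tr _ c (xin a x) (oact (oact (xin a x) g^-1%g) g) (esym (ez x))).
rewrite (hm_compat HM).
rewrite (cvalP c (oact (xin a x) g^-1%g) g) tlift_tens; last by bilsolve.
have e1 : f z = 1%g by rewrite (hm_f HM) mulgV.
transitivity (tlift (fun p q => tens ((eps (tr H e1 p) : k) *: c) q)
   (Delta (f z) g (tr H (hm_f HM z g) (tr H (congr1 f (esym (ez x))) h)))).
  rewrite (tlift_comp _ _ (_ : linear (tlift (fun n h => tens (Pfam x n) h)))); last by linsolve.
  apply: tlift_ext => p q; rewrite tlift_tens; last by bilsolve.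
  by rewrite (mu1 g) Pfam_mact.
transitivity (tens c (tlift (fun p q => (eps (tr H e1 p) : k) *: q)
   (D (erefl (f z * g)%g) (tr H (hm_f HM z g) (tr H (congr1 f (esym (ez x))) h))))).
  rewrite (tlift_comp _ _ (tens_lin_r c)) D_refl; apply: tlift_ext => p q.
  by rewrite tensZl tensZr.
have e2 : g = (f z * g)%g by rewrite e1 mul1g.
by rewrite (D_counit_l _ e1 e2) !trT tr_id.
Qed.

Lemma orbit_act x h : Defs.orbit a (a x h) = Defs.orbit a x.
Proof.
apply: funext => y; apply: propext; split => [[g ->]|[g ->]].
  by exists (h * g)%g; rewrite (ractM a).
by exists (h^-1 * g)%g; rewrite (ractM a) mulVKg.
Qed.

Definition rep (O : orbits a) : X := proj1_sig (cid (proj2_sig O)).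
Lemma repP (O : orbits a) : proj1_sig O = Defs.orbit a (rep O).
Proof. exact: (proj2_sig (cid (proj2_sig O))). Qed.

Definition psi (z : orbits a * G) : X := a (rep z.1) ((f (rep z.1))^-1 * z.2)%g.

Lemma phipsi (z : orbits a * G) : (orb a (psi z), f (psi z)) = z.
Proof.
case: z => O g; rewrite /psi /=; congr pair.
  case: O => P hP; rewrite /orb; apply: eq_exist_uncurried.
  have e : Defs.orbit a (a (rep (exist _ P hP)) ((f (rep (exist _ P hP)))^-1 * g)%g) = P.
    by rewrite orbit_act -(repP (exist _ P hP)).
  by exists e; apply: Prop_irrelevance.
by rewrite (hm_f HM) mulVKg.
Qed.

Lemma psiphi x : psi (orb a x, f x) = x.
Proof.
rewrite /psi /=.
have : Defs.orbit a x x by exists 1%g; rewrite (ract1 a).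
have -> : Defs.orbit a x = Defs.orbit a (rep (orb a x)) by exact: (repP (orb a x)).
case=> g0 E.
rewrite {3 4}E (hm_f HM) mulKg.
by rewrite -E.
Qed.

Lemma trG_lin (A : Type) (F : A -> lmodType k) (u v : A) (e : u = v) : linear (tr F e).
Proof. by case: v / e. Qed.

Lemma tmor_eq (A B : Type) (N1 : A -> lmodType k) (N2 : B -> lmodType k)
  (p1 p2 : B -> A) (c1 : forall y, N1 (p1 y) -> N2 y) (c2 : forall y, N1 (p2 y) -> N2 y)
  (h : forall y, p1 y = p2 y) :
  (forall y m, c2 y (tr N1 (h y) m) = c1 y m) ->
  existT (fun p : B -> A => forall y, N1 (p y) -> N2 y) p1 c1
  = existT (fun p : B -> A => forall y, N1 (p y) -> N2 y) p2 c2.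
Proof.
have E : p1 = p2 by apply: funext.
subst p2 => hc; congr (existT _ p1 _).
apply: functional_extensionality_dep => y; apply: funext => m.
by rewrite -hc (Prop_irrelevance (h y) erefl).
Qed.

Lemma helper x' x (d : x' = x) (e : (orb a x', f x') = (orb a x, f x)) (m : M x') :
  tr M d m = Phi x (tr (coinvH one rho) e (Q x' m)).
Proof.
case: x / d e => e.
by rewrite (Prop_irrelevance e erefl) /= PhiQ.
Qed.

Lemma main : tiso (hopf_phi one mact rho).
Proof.
split; first by move=> x; exact: Phi_lin.
pose F' := existT (fun p : orbits a * G -> X => forall z, M (p z) -> coinvH one rho z) psi
  (fun z m => tr (coinvH one rho) (phipsi z) (Q (psi z) m)).
exists F'; split; [|split].
- move=> z /=; apply: (lin_comp (trG_lin _ _ _ _ (phipsi z))); exact: Q_lin.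
- rewrite /tcomp /tid /=.
  apply: (tmor_eq _ _ _ _ _ _ _ _ phipsi) => z m /=.
  by rewrite QPhi.
- rewrite /tcomp /tid /=.
  apply: (tmor_eq _ _ _ _ _ _ _ _ psiphi) => x m /=.
  exact (helper _ _ (psiphi x) (phipsi (orb a x, f x)) m).
Qed.

End Module.

End Hopf.


Local Close Scope ring_scope.

Theorem theorem3p3 (k : comPzRingType) (G : groupType)
  (H : G -> lmodType k) (mu : forall g, H g -> H g -> H g) (one : forall g, H g)
  (Delta : forall g h : G, {linear H (g * h)%g -> tensor_type (H g) (H h)})
  (eps : {linear H 1%g -> GRing.regular k})
  (S : forall g : G, {linear H (g^-1)%g -> H g})
  (HH : @is_hopf_G_coalgebra k G H mu one Delta eps S)
  (X : Type) (a : ractType G X) (f : X -> G) (M : X -> lmodType k)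
  (mact : forall x, M x -> H (f x) -> M x)
  (rho : forall x g, {linear M (a x g) -> tensor_type (M x) (H g)})
  (HM : @is_hopf_module k G H mu one Delta eps X a f M mact rho) :
  tiso (@hopf_phi k G H one X a f M mact rho).
Proof.
eapply main; eassumption.
Qed.
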